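(* Let $\mathbb{F}$ be a finite field with $q$ elements, let $T,n,r$ be positive integers, and let $X$ be a uniformly random matrix in $\mathbb{F}^{T\times n}$. If $r^n\cdot q^{\binom{r+T}{r}-n}\ge1$, then $$\mathbb{E}[\operatorname{rank}(X^r)]\ge n\left(1-\frac{\ln r}{\ln q}\right)-\frac{1}{\ln q}.$$
   Context: For $X\in\mathbb{F}^{T\times n}$, $X^r\in\mathbb{F}^{\binom{r+T}{r}\times n}$ is the matrix whose rows are all coordinatewise products of at most $r$ rows of $X$, products with repeated rows included (one row for each multiset of at most $r$ row indices, the empty product being the all-ones row); i.e., the matrix of all monomials of total degree at most $r$ in the rows of $X$. *)

(* Defs.v *)
From Stdlib Require Import Reals.
From HB Require Import structures.
From mathcomp Require Import all_boot all_order all_algebra.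
From mathcomp Require Import Rstruct.
Set Implicit Arguments. Unset Strict Implicit. Unset Printing Implicit Defensive.
Import Order.TTheory GRing.Theory Num.Theory.
Local Open Scope ring_scope.

(* Multisets of at most r elements of the row-index set 'I_T, encoded by their
   multiplicity (exponent) vectors e with \sum_i e i <= r.  There are
   'C(r+T, r) of them. *)
Definition msets (T r : nat) :=
  {e : {ffun 'I_T -> 'I_r.+1} | (\sum_i (e i : nat) <= r)%N}.

(* X^r : one row per multiset of at most r row indices, the row being the
   coordinatewise product of the corresponding rows of X (with repetitions);
   the empty multiset gives the all-ones row. *)
Definition Xpow (F : fieldType) (T n r : nat) (X : 'M[F]_(T, n))
  : 'M[F]_(#|{: msets T r}|, n) :=
  \matrix_(k < #|{: msets T r}|, j < n)
     \prod_(i < T) X i j ^+ (val (enum_val k) i : nat).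

Definition exp_rank (F : finFieldType) (T n r : nat) : R :=
  (\sum_(X : 'M[F]_(T, n)) (\rank (Xpow r X))%:R) / (#|F| ^ (T * n))%:R.

(* Main.v *)
Require Import Defs.
From Stdlib Require Import Reals.
From HB Require Import structures.
From mathcomp Require Import all_boot all_order all_algebra.
From mathcomp Require Import Rstruct.
From mathcomp Require Import zify ring lra.
Import Order.TTheory GRing.Theory Num.Theory.
Set Implicit Arguments. Unset Strict Implicit. Unset Printing Implicit Defensive.

Section Split.
Variable A : finType.

Definition fcons T (a : A) (y : {ffun 'I_T -> A}) : {ffun 'I_T.+1 -> A} :=
  [ffun j => if unlift ord0 j is Some j' then y j' else a].
Definition ftail T (x : {ffun 'I_T.+1 -> A}) : {ffun 'I_T -> A} :=
  [ffun j => x (lift ord0 j)].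

Lemma fcons0 T a (y : {ffun 'I_T -> A}) : fcons a y ord0 = a.
Proof. by rewrite ffunE unlift_none. Qed.

Lemma ftail_fcons T a (y : {ffun 'I_T -> A}) : ftail (fcons a y) = y.
Proof. by apply/ffunP => j; rewrite !ffunE liftK. Qed.

Lemma fcons_eta T (x : {ffun 'I_T.+1 -> A}) : fcons (x ord0) (ftail x) = x.
Proof.
apply/ffunP => j; rewrite ffunE; case: unliftP => [j'|] ->; by rewrite ?ffunE.
Qed.

Lemma sum_ffunS T (G : {ffun 'I_T.+1 -> A} -> nat) :
  \sum_x G x = \sum_a \sum_(y : {ffun 'I_T -> A}) G (fcons a y).
Proof.
rewrite pair_big /=.
rewrite (reindex (fun p : A * {ffun 'I_T -> A} => fcons p.1 p.2)) //=.
exists (fun x : {ffun 'I_T.+1 -> A} => (x ord0, ftail x)) => [[a y] _|x _] /=.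
  by rewrite fcons0 ftail_fcons.
by rewrite fcons_eta.
Qed.
End Split.

Section SZ.
Local Open Scope ring_scope.
Variable F : finFieldType.

Fixpoint good (T : nat) : nat -> ({ffun 'I_T -> F} -> F) -> Prop :=
  match T return nat -> ({ffun 'I_T -> F} -> F) -> Prop with
  | 0 => fun d f => forall x, f x != 0
  | T'.+1 => fun d f => exists K (g : nat -> {ffun 'I_T' -> F} -> F),
      [/\ (K <= d)%N, good (d - K) (g K) &
        forall x, f x = \sum_(k < K.+1) (x ord0) ^+ k * g k (ftail x)]
  end.

Lemma sum_ind_card (I : finType) (P : pred I) :
  (\sum_(x : I) (P x : nat))%N = #|P|.
Proof.
rewrite -sum1_card [RHS]big_mkcond /=; apply: eq_bigr => x _; rewrite unfold_in; by case: (P x).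
Qed.

Lemma roots_count (p : {poly F}) : p != 0 ->
  (\sum_(a : F) (p.[a] == 0%R : nat) < size p)%N.
Proof.
move=> p0; rewrite (sum_ind_card (fun a => p.[a] == 0)) cardE.
apply: max_poly_roots => //; last exact: enum_uniq.
by apply/allP => a; rewrite mem_enum.
Qed.

Lemma arith q Q S K D : (q*S <= D*Q -> q*(S*q + Q*K) <= (D+K)*(q*Q))%N.
Proof. nia. Qed.

Lemma SZ T d (f : {ffun 'I_T -> F} -> F) : good d f ->
  (#|F| * \sum_(x : {ffun 'I_T -> F}) (f x == 0%R : nat) <= d * #|F| ^ T)%N.
Proof.
elim: T d f => [|T IH] d f /=.
  by move=> H; rewrite big1 ?muln0 // => x _; rewrite (negbTE (H x)).
case=> K [g [Kd gK fE]].
rewrite sum_ffunS exchange_big /=.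
have H1 : forall y : {ffun 'I_T -> F},
   (\sum_a (f (fcons a y) == 0%R : nat) <= (g K y == 0%R) * #|F| + K)%N.
  move=> y; under eq_bigr => a _ do rewrite fE fcons0 ftail_fcons.
  have [gy0|gyn0] := eqVneq (g K y) 0.
    rewrite mul1n -sum1_card; apply: leq_trans (leq_addr _ _).
    by rewrite leq_sum // => a _; case: (_ == 0).
  rewrite mul0n add0n.
  pose p : {poly F} := \poly_(k < K.+1) g k y.
  have pE a : \sum_(k < K.+1) a ^+ k * g k y = p.[a].
    by rewrite horner_poly; apply: eq_bigr => k _; rewrite mulrC.
  under eq_bigr => a _ do rewrite pE.
  have pn0 : p != 0.
    apply/eqP => /(congr1 (fun q : {poly F} => q`_K)).
    by rewrite coef_poly ltnSn coef0; apply/eqP.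
  rewrite -ltnS; apply: leq_trans (roots_count pn0) _; exact: size_poly.
have H2 : (\sum_(y : {ffun 'I_T -> F}) \sum_a (f (fcons a y) == 0%R : nat) <=
   \sum_(y : {ffun 'I_T -> F}) ((g K y == 0%R) * #|F| + K))%N.
  by apply: leq_sum => y _; exact: H1.
apply: leq_trans (leq_mul (leqnn _) H2) _.
rewrite big_split /= -big_distrl /= sum_nat_const card_ffun card_ord.
have IH' := IH _ _ gK.
rewrite ?card_ffun ?card_ord /= in IH' *.
set S := (\sum_(i : {ffun 'I_T -> F}) _)%N in IH' *.
rewrite expnS.
by have := arith K IH'; rewrite subnK.
Qed.

Lemma good_of T (I : finType) (c : I -> F) (e : I -> 'I_T -> nat) d :
  (forall i j, c i != 0 -> c j != 0 -> (forall k, e i k = e j k) -> i = j) ->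
  (forall i, c i != 0 -> (\sum_k e i k <= d)%N) ->
  (exists i, c i != 0) ->
  good d (fun x : {ffun 'I_T -> F} => \sum_i c i * \prod_k x k ^+ e i k).
Proof.
elim: T I c e d => [|T IH] I c e d inj deg [i0 ci0].
  move=> x; rewrite (bigD1 i0) //= big_ord0 mulr1 big1 ?addr0 //.
  move=> j ji0; have [->|cj] := eqVneq (c j) 0; first by rewrite mul0r.
  by case/eqP: ji0; apply: inj => // -[].
pose K := \max_(i | c i != 0) e i ord0.
pose i1 := [arg max_(i > i0 | c i != 0) e i ord0].
have Ki1 : K = e i1 ord0 by rewrite /K (bigop.bigmax_eq_arg i0 ci0).
have ci1 : c i1 != 0 by rewrite /i1; case: arg_maxnP.
have deg1 i : c i != 0%R -> (e i ord0 + \sum_(k < T) e i (lift ord0 k) <= d)%N.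
  by move=> ci; rewrite -big_ord_recl; exact: deg.
exists K, (fun k y => \sum_i (if e i ord0 == k then c i else 0) *
                        \prod_k' y k' ^+ e i (lift ord0 k')).
split.
- by have := deg1 _ ci1; rewrite -Ki1 => /(leq_trans (leq_addr _ _)).
- have hc i : (if e i ord0 == K then c i else 0) != 0 -> e i ord0 = K /\ c i != 0.
    by case: (e i ord0 =P K) => // _; rewrite eqxx.
  apply: IH.
  + move=> i j /hc[ei ci] /hc[ej cj] eij.
    apply: inj => // k; case: (unliftP ord0 k) => [k'|] ->; first exact: eij.
    by rewrite ei ej.
  + move=> i /hc[ei ci].
    have H := deg1 _ ci; rewrite ei in H; rewrite leq_subRL //; exact: leq_trans (leq_addr _ _) H.
  + by exists i1; rewrite -Ki1 eqxx.
- move=> x.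
  under [RHS]eq_bigr => k _ do rewrite mulr_sumr.
  rewrite exchange_big /=; apply: eq_bigr => i _.
  have [->|ci] := eqVneq (c i) 0.
    by rewrite mul0r big1 // => k _; case: eqP; rewrite !(mul0r, mulr0).
  have eK : (e i ord0 < K.+1)%N by rewrite ltnS bigop.leq_bigmax_cond.
  rewrite (bigD1 (Ordinal eK)) //= eqxx [X in _ + X]big1 ?addr0; last first.
    move=> k; rewrite -val_eqE /= eq_sym => /negbTE ->.
    by rewrite mul0r mulr0.
  rewrite big_ord_recl mulrCA; congr (_ * (_ * _)).
  by apply: eq_bigr => k _; rewrite ffunE.
Qed.
End SZ.

Section Count.
Local Open Scope ring_scope.
Variable F : finFieldType.

Lemma card_ker m n (A : 'M[F]_(m, n)) :
  (\sum_(c : 'rV[F]_m) (c *m A == 0%R : nat))%N = (#|F| ^ (m - \rank A))%N.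
Proof.
rewrite (sum_ind_card (fun c : 'rV[F]_m => c *m A == 0)).
rewrite -mxrank_ker; set K := kermx A.
rewrite -[\rank K]mul1n -card_mx.
have injK: injective (mulmxr (row_base K)).
  have /row_freeP[K' K'K] := row_base_free K.
  by move=> ?; apply: can_inj (mulmxr K') _ => u; rewrite /= -mulmxA K'K mulmx1.
rewrite -(card_image (injK _)); apply: eq_card => v.
transitivity (v *m A == 0); first by [].
by rewrite -sub_kermx -/K -(eq_row_base K) (sameP submxP codomP).
Qed.

Variables (T n r : nat).
Local Notation M := #|{: msets T r}|.

Definition fc (c : 'rV[F]_M) (x : {ffun 'I_T -> F}) : F :=
  \sum_(k < M) c 0 k * \prod_i x i ^+ (val (enum_val k) i : nat).

Lemma fc_good c : c != 0 -> good r (fc c).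
Proof.
move=> cn0; apply: good_of.
- move=> k k' _ _ ekk; apply: enum_val_inj; apply: val_inj; apply/ffunP => i.
  exact/val_inj/ekk.
- by move=> k _; exact: (valP (enum_val k)).
- apply/existsP; apply: contraR cn0 => /existsPn H; apply/eqP/rowP => k.
  by rewrite mxE; apply/eqP; move: (H k); rewrite negbK.
Qed.

Lemma mulXpow (c : 'rV[F]_M) (X : 'M[F]_(T, n)) j :
  (c *m Xpow r X) 0 j = fc c [ffun i => X i j].
Proof.
rewrite mxE; apply: eq_bigr => k _; rewrite mxE; congr (_ * _).
by apply: eq_bigr => i _; rewrite ffunE.
Qed.

Lemma count_X (c : 'rV[F]_M) : c != 0 ->
  (#|F| ^ n * \sum_(X : 'M[F]_(T, n)) (c *m Xpow r X == 0%R : nat)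
     <= r ^ n * #|F| ^ (T * n))%N.
Proof.
move=> cn0.
have hz := SZ (fc_good cn0).
rewrite (sum_ind_card (fun x => fc c x == 0)) in hz.
rewrite (sum_ind_card (fun X : 'M[F]_(T, n) => c *m Xpow r X == 0)).
set Z := [pred x | fc c x == 0] in hz *.
set S := [pred X : 'M[F]_(T, n) | c *m Xpow r X == 0].
pose phi (X : 'M[F]_(T, n)) := [ffun j : 'I_n => [ffun i => X i j]].
have phi_inj : injective phi.
  move=> X Y /ffunP h; apply/matrixP => i j.
  by move/ffunP: (h j) => /(_ i); rewrite !ffunE.
have cS : (#|S| <= #|Z| ^ n)%N.
  rewrite -(card_imset (mem S) phi_inj).
  have := @card_ffun_on 'I_n _ Z; rewrite card_ord => <-.
  apply: subset_leq_card; apply/subsetP => _ /imsetP[X XS ->].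
  apply/ffun_onP => j; rewrite ffunE inE /=.
  move: XS; rewrite inE /= => /eqP /matrixP /(_ 0 j).
  by rewrite mulXpow mxE => ->.
apply: leq_trans (leq_mul (leqnn _) cS) _.
rewrite -expnMn mulnC expnM -expnMn.
have [->|n0] := posnP n; first by rewrite !expn0.
by rewrite leq_exp2r // mulnC.
Qed.

Lemma total_bound :
  (#|F| ^ n * \sum_(X : 'M[F]_(T, n)) #|F| ^ (M - \rank (Xpow r X))
     <= #|F| ^ (T * n) * (#|F| ^ n + #|F| ^ M * r ^ n))%N.
Proof.
under eq_bigr => X _ do rewrite -card_ker.
rewrite exchange_big /= (bigD1 0) //=.
rewrite (eq_bigr (fun _ => 1%N)); last by move=> X _; rewrite mul0mx eqxx.
rewrite sum_nat_const card_mx muln1 !mulnDr (mulnC (_ ^ n)%N).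
rewrite leq_add2l big_distrr /=.
have h1 : (\sum_(c : 'rV[F]_M | c != 0%R)
     #|F| ^ n * \sum_(X : 'M[F]_(T, n)) (c *m Xpow r X == 0%R : nat) <=
   \sum_(c : 'rV[F]_M | c != 0%R) r ^ n * #|F| ^ (T * n))%N.
  by apply: leq_sum => c; exact: count_X.
apply: leq_trans h1 _.
rewrite sum_nat_const.
apply: leq_trans (leq_mul (max_card _) (leqnn _)) _.
rewrite card_mx mul1n.
by rewrite [X in (_ <= X)%N]mulnC -mulnA.
Qed.
End Count.

Section Comb.
Local Open Scope ring_scope.


Lemma hockey T r : (\sum_(b < r.+1) 'C(b + T, b))%N = 'C(r + T.+1, r).
Proof.
elim: r => [|r IH]; first by rewrite big_ord_recr big_ord0 /= !bin0.
rewrite big_ord_recr /= IH.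
rewrite [(r.+1 + T.+1)%N]addnS binS [RHS]addnC; congr (_ + _). by rewrite addnS addSn.
Qed.

Lemma cnt_ffun m T r : (r < m)%N ->
  (\sum_(e : {ffun 'I_T -> 'I_m}) (\sum_i (e i : nat) <= r : nat))%N = 'C(r + T, r).
Proof.
elim: T r => [|T IH] r rm.
  rewrite (eq_bigr (fun _ => 1%N)); last by move=> e _; rewrite big_ord0.
  by rewrite sum_nat_const card_ffun !card_ord expn0 addn0 binn.
rewrite sum_ffunS.
have E a (y : {ffun 'I_T -> 'I_m}) :
    (\sum_i (fcons a y i : nat) = a + \sum_i (y i : nat))%N.
  by rewrite big_ord_recl fcons0; congr (_ + _); apply: eq_bigr => i _;
     rewrite ffunE liftK.
under eq_bigr => a _ do under eq_bigr => y _ do rewrite E.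
have G a : (\sum_(y : {ffun 'I_T -> 'I_m}) ((a : nat) + \sum_i (y i : nat) <= r : nat))%N
    = (if (a <= r)%N then 'C(r - a + T, r - a) else 0)%N.
  case: leqP => ar.
    rewrite -IH; last by apply: leq_ltn_trans rm; exact: leq_subr.
    by apply: eq_bigr => y _; rewrite leq_subRL.
  rewrite big1 // => y _; rewrite leqNgt.
  by rewrite (leq_trans ar (leq_addr _ _)).
under eq_bigr => a _ do rewrite G.
rewrite -(big_mkord xpredT (fun a => if (a <= r)%N then 'C(r - a + T, r - a) else 0%N)).
rewrite (big_cat_nat _ (n := r.+1)) //=.
rewrite [X in (_ + X)%N]big_nat_cond [X in (_ + X)%N]big1 ?addn0; last first.
  by move=> i /andP[/andP[hi _] _]; rewrite leqNgt hi.
rewrite big_nat_cond (eq_bigr (fun a => 'C(r - a + T, r - a))); last first.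
  by move=> i /andP[/andP[_ hi] _]; rewrite -ltnS hi.
rewrite -big_nat_cond big_rev_mkord subn0 -hockey.
apply: eq_bigr => i _; rewrite subSS subKn //.
by rewrite -ltnS.
Qed.

Lemma card_msets T r : #|{: msets T r}| = 'C(r + T, r).
Proof.
rewrite card_sig -(cnt_ffun T (ltnSn r)).
by rewrite -(sum_ind_card (fun e : {ffun 'I_T -> 'I_r.+1} => (\sum_i (e i : nat) <= r)%N)).
Qed.

End Comb.

Section RealLemmas.
Local Open Scope ring_scope.
Lemma expi1 (x : R) : 1 + x <= exp x.
Proof. by apply/RleP; exact: exp_ineq1_le. Qed.

Lemma exp_gt0 (x : R) : 0 < exp x.
Proof. by apply/RltP; exact: exp_pos. Qed.

Lemma expD (x y : R) : exp (x + y) = exp x * exp y.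
Proof. exact: exp_plus. Qed.

Lemma exp_le_inv' (x y : R) : exp x <= exp y -> x <= y.
Proof.
move=> h; rewrite leNgt; apply/negP => /RltP /exp_increasing /RltP.
by rewrite ltNge h.
Qed.

Lemma ln_le' (x y : R) : 0 < x -> x <= y -> ln x <= ln y.
Proof.
move=> x0; rewrite le_eqVlt => /orP[/eqP -> //|xy].
by apply/ltW/RltP; apply: ln_increasing; apply/RltP.
Qed.

Lemma ln_gt0' (x : R) : 1 < x -> 0 < ln x.
Proof.
move=> x1; have l1 : ln 1 = 0 :> R by exact: ln_1.
rewrite -l1; apply/RltP; apply: ln_increasing; apply/RltP => //.
Qed.

Lemma ln2_le1 : ln 2 <= 1 :> R.
Proof.
have h : (2 : R) <= exp 1 by have := expi1 1.
have := ln_le' (ltr0Sn _ 1) h; rewrite ln_exp => //.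
Qed.

Lemma exp_natln (Q : R) (k : nat) : 0 < Q -> exp (k%:R * ln Q) = Q ^+ k.
Proof.
move=> /RltP Q0; have := @Rpower_pow k Q Q0; rewrite /Rpower INRE RpowE => <- //.
Qed.

Lemma lnM' (x y : R) : 0 < x -> 0 < y -> ln (x * y) = ln x + ln y.
Proof. by move=> /RltP x0 /RltP y0; exact: ln_mult. Qed.

Lemma lnX' (x : R) k : 0 < x -> ln (x ^+ k) = k%:R * ln x.
Proof. by move=> /RltP x0; rewrite -RpowE ln_pow // INRE. Qed.

Lemma IZR2 : IZR 2 = 2 :> R.
Proof. by rewrite IZRposE INRE. Qed.

Lemma aux2 (a b c : R) : a <= b + c -> b <= c -> a <= 2 * c.
Proof. lra. Qed.

Lemma aux3 (x L m e l y : R) :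
  x + L * (m - e) <= l + y + m * L -> l <= 1 -> x - y - 1 <= e * L.
Proof. lra. Qed.

End RealLemmas.

Unset Implicit Arguments.
Local Open Scope ring_scope.

Theorem fact4p7 (F : finFieldType) (T n r : nat) :
  (0 < T)%N -> (0 < n)%N -> (0 < r)%N ->
  1 <= (r%:R : R) ^+ n * (#|F|%:R : R) ^ ('C(r + T, r)%:Z - n%:Z) ->
  n%:R * (1 - ln r%:R / ln #|F|%:R) - 1 / ln #|F|%:R <= exp_rank F T n r.
Proof.
move=> T0 n0 r0 hyp.
have q1 : (1 < #|F|)%N := card_finNzRing_gt1 F.
have M_C := card_msets T r.
set q := #|F| in q1 hyp *.
set M := #|{: msets T r}| in M_C.
set Q : R := q%:R.
have Q1 : 1 < Q by rewrite /Q ltr1n.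
have Q0 : 0 < Q by apply: lt_trans Q1; exact: ltr01.
set L := ln Q.
have L0 : 0 < L := ln_gt0' Q1.
set N0 := (q ^ (T * n))%N.
have N0R0 : 0 < (N0%:R : R) by rewrite ltr0n expn_gt0 (ltn_trans _ q1).
pose rk (X : 'M[F]_(T, n)) := \rank (Xpow r X).
set S := \sum_(X : 'M[F]_(T, n)) (rk X)%:R : R.
have -> : exp_rank F T n r = S / N0%:R by [].
set E := S / N0%:R.
have jen : N0%:R * exp (L * (M%:R - E)) <=
           \sum_(X : 'M[F]_(T, n)) exp (L * (M%:R - (rk X)%:R)).
  apply: (@le_trans _ _ (\sum_(X : 'M[F]_(T, n)) exp (L * (M%:R - E)) * (1 + L * (E - (rk X)%:R)))).
    rewrite -mulr_sumr big_split /= sumr_const -mulr_sumr sumrB sumr_const card_mx.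
    have -> : E *+ N0 = S by rewrite -mulr_natr /E divfK // gt_eqF.
    by rewrite subrr mulr0 addr0 mulrC.
  apply: ler_sum => X _.
  have -> : exp (L * (M%:R - (rk X)%:R)) = exp (L * (M%:R - E)) * exp (L * (E - (rk X)%:R)).
    by rewrite -expD; congr exp; rewrite ?RplusE ?RminusE ?RmultE; ring.
  by rewrite ler_wpM2l ?expi1 // ltW // exp_gt0.
have exp_eq X : exp (L * (M%:R - (rk X)%:R)) = ((q ^ (M - rk X))%N)%:R.
  by rewrite RminusE -natrB ?rank_leq_row // RmultE mulrC exp_natln // natrX.
rewrite (eq_bigr _ (fun X _ => exp_eq X)) in jen.
rewrite -natr_sum in jen.
have tb := total_bound F T n r.
rewrite -(ler_nat R) natrM natrM natrD natrM !natrX -/Q -/N0 in tb.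
have N0E : (N0%:R : R) = Q ^+ (T * n) by rewrite natrX.
rewrite N0E in jen N0R0.
have h1 := le_trans (ler_wpM2l (ltW (exprn_gt0 n Q0)) jen) tb.
have h2 : Q ^+ n * exp (L * (M%:R - E)) <= Q ^+ n + Q ^+ M * r%:R ^+ n.
  by rewrite -(ler_pM2l N0R0) mulrCA.
have h3 : Q ^+ n <= r%:R ^+ n * Q ^+ M.
  have e : Q ^ ('C(r + T, r)%:Z - n%:Z) * Q ^+ n = Q ^+ M.
    by rewrite M_C -[Q ^+ n]/(Q ^ (n%:Z)) -expfzDr ?gt_eqF // subrK.
  by rewrite -e mulrA -{1}[Q ^+ n]mul1r ler_wpM2r // ltW // exprn_gt0.
have R0 : 0 < (r%:R : R) by rewrite ltr0n.
have h4 : exp (n%:R * L + L * (M%:R - E)) <= exp (ln 2 + n%:R * ln r%:R + M%:R * L).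
  rewrite !expD !exp_natln // exp_ln; last exact: Rlt_0_2.
  rewrite IZR2 -mulrA [r%:R ^+ n * _]mulrC; apply: (aux2 h2).
  by rewrite mulrC.
have h5 := exp_le_inv' h4.
have l2 := ln2_le1.
rewrite ?RplusE ?RminusE ?RmultE in h5.
have key : n%:R * L - n%:R * ln r%:R - 1 <= E * L by exact: aux3 h5 l2.
have -> : n%:R * (1 - ln r%:R / L) - 1 / L = (n%:R * L - n%:R * ln r%:R - 1) / L.
  by field; rewrite gt_eqF.
by rewrite ler_pdivrMr.
Qed.
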